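(* Let $R$ be a ring. Then: \begin{enumerate} \item $\mathbb{L}\mathrm{Ore}_l(R)\subseteq {}'\mathbb{L}_l(R)\subseteq\mathbb{L}^p_l(R)$ and $\mathbb{L}\mathrm{Ore}_l(R)={}'\mathbb{L}_l(R)\cap\mathrm{Ore}_l(R)=\mathbb{L}^p_l(R)\cap\mathrm{Ore}_l(R)$. \item $\mathbb{L}\mathrm{Ore}_r(R)\subseteq \mathbb{L}'_r(R)\subseteq\mathbb{L}^p_r(R)$ and $\mathbb{L}\mathrm{Ore}_r(R)=\mathbb{L}'_r(R)\cap\mathrm{Ore}_r(R)=\mathbb{L}^p_r(R)\cap\mathrm{Ore}_r(R)$. \item $\mathrm{Ore}(R)\subseteq {}'\mathbb{L}'_{l,r}(R)\subseteq\mathbb{L}^p(R)$. \end{enumerate}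
   Context: Rings are associative with $1$. A multiplicative set $S\subseteq R$: $SS\subseteq S$, $1\in S$, $0\notin S$. $R\langle S^{-1}\rangle=R\langle X_S\rangle/I_S$ ($R\langle X_S\rangle$ freely generated by $R$ and noncommuting $x_s$, $s\in S$; $I_S$ generated by $sx_s-1,x_ss-1$); $\mathrm{ass}_R(S)=\ker(R\to R\langle S^{-1}\rangle)$. $S$ is left (resp. right) localizable if $R\langle S^{-1}\rangle\neq0$ and every element is of the form $(x_s+I_S)(r+I_S)$ (resp. $(r+I_S)(x_s+I_S)$), $s\in S,r\in R$; localizable if both; these sets are $\mathbb{L}_l(R),\mathbb{L}_r(R),\mathbb{L}(R)$. For a ring $A$, ${}'\mathcal{C}_A=\{r:xr=0\Rightarrow x=0\}$, $\mathcal{C}'_A=\{r:rx=0\Rightarrow x=0\}$, $\mathcal{C}_A={}'\mathcal{C}_A\cap\mathcal{C}'_A$. For a multiplicative set $S$: $\mathfrak{a}(S)$ (resp. ${}'\mathfrak{a}(S)$, $\mathfrak{a}'(S)$) is the least ideal $\mathfrak{b}$ of $R$ with image of $S$ in $R/\mathfrak{b}$ contained in $\mathcal{C}_{R/\mathfrak{b}}$ (resp. ${}'\mathcal{C}_{R/\mathfrak{b}}$, $\mathcal{C}'_{R/\mathfrak{b}}$). $\mathbb{L}^p_*(R)=\{S\in\mathbb{L}_*(R):\mathrm{ass}_R(S)=\mathfrak{a}(S)\}$ (perfect localizable sets), $*\in\{l,r,\emptyset\}$. $S$ is a left Ore set if $Sr\cap Rs\neq\emptyset$ for all $r\in R,s\in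 S$; right Ore symmetrically; Ore = left and right; $\mathrm{Ore}_l(R),\mathrm{Ore}_r(R),\mathrm{Ore}(R)$ are these sets. ${}'\mathbb{L}_l(R)$ is the set of multiplicative sets $S$ such that the image of $S$ in $R/{}'\mathfrak{a}(S)$ is a left Ore set of $R/{}'\mathfrak{a}(S)$; $\mathbb{L}'_r(R)$ is the set of multiplicative sets $S$ whose image in $R/\mathfrak{a}'(S)$ is a right Ore set; ${}'\mathbb{L}'_{l,r}(R)={}'\mathbb{L}_l(R)\cap\mathbb{L}'_r(R)$; $\mathbb{L}\mathrm{Ore}_*(R)=\mathbb{L}_*(R)\cap\mathrm{Ore}_*(R)$. *)

(* Defs.v *)
From HB Require Import structures.
From mathcomp Require Import all_boot all_order all_algebra.
Set Implicit Arguments. Unset Strict Implicit. Unset Printing Implicit Defensive.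
Import GRing.Theory.
Local Open Scope ring_scope.

Section Loc.
Variable R : pzRingType.

Definition mult_set (S : R -> Prop) : Prop :=
  S 1 /\ ~ S 0 /\ (forall a b, S a -> S b -> S (a * b)).

Definition is_ideal (b : R -> Prop) : Prop :=
  b 0 /\ (forall x y, b x -> b y -> b (x - y)) /\
  (forall r x, b x -> b (r * x) /\ b (x * r)).

Definition inverts {B : pzRingType} (S : R -> Prop) (f : R -> B) : Prop :=
  forall s, S s -> exists y : B, y * f s = 1 /\ f s * y = 1.

(* (A, sigma) is R<S^{-1}> = R<X_S>/I_S, characterized up to isomorphism by
   its universal property among all S-inverting ring morphisms. *)
Definition univ_loc (S : R -> Prop) (A : pzRingType) (sigma : {rmorphism R -> A})
  : Prop :=
  inverts S sigma /\
  forall (B : pzRingType) (f : {rmorphism R -> B}), inverts S f ->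
    exists g : {rmorphism A -> B},
      (forall r, g (sigma r) = f r) /\
      (forall g' : {rmorphism A -> B}, (forall r, g' (sigma r) = f r) -> g' =1 g).

(* ass_R(S) = ker (R -> R<S^{-1}>) *)
Arguments univ_loc : clear implicits.
Definition ass (S : R -> Prop) (r : R) : Prop :=
  forall (A : pzRingType) (sigma : {rmorphism R -> A}),
    univ_loc S A sigma -> sigma r = 0.

Definition left_localizable (S : R -> Prop) : Prop :=
  exists (A : pzRingType) (sigma : {rmorphism R -> A}),
    univ_loc S A sigma /\ (1 : A) <> 0 /\
    forall a : A, exists s r (y : A),
      S s /\ y * sigma s = 1 /\ sigma s * y = 1 /\ a = y * sigma r.

Definition right_localizable (S : R -> Prop) : Prop :=
  exists (A : pzRingType) (sigma : {rmorphism R -> A}),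
    univ_loc S A sigma /\ (1 : A) <> 0 /\
    forall a : A, exists s r (y : A),
      S s /\ y * sigma s = 1 /\ sigma s * y = 1 /\ a = sigma r * y.

Definition localizable (S : R -> Prop) : Prop :=
  left_localizable S /\ right_localizable S.

(* image of s in R/b lies in 'C_{R/b}: (x s = 0 => x = 0) in R/b *)
Definition lreg_mod (b : R -> Prop) (s : R) : Prop := forall x, b (x * s) -> b x.
(* image of s in R/b lies in C'_{R/b}: (s x = 0 => x = 0) in R/b *)
Definition rreg_mod (b : R -> Prop) (s : R) : Prop := forall x, b (s * x) -> b x.

(* 'a(S): least ideal b with image of S in 'C_{R/b} (intersection of all such) *)
Definition la (S : R -> Prop) (r : R) : Prop :=
  forall b, is_ideal b -> (forall s, S s -> lreg_mod b s) -> b r.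
Definition ra (S : R -> Prop) (r : R) : Prop :=
  forall b, is_ideal b -> (forall s, S s -> rreg_mod b s) -> b r.
Definition a (S : R -> Prop) (r : R) : Prop :=
  forall b, is_ideal b -> (forall s, S s -> lreg_mod b s /\ rreg_mod b s) -> b r.

(* image of S in R/b is a left (resp. right) Ore set of R/b; in particular
   a multiplicative set of R/b, i.e. 0 is not in the image *)
Definition left_Ore_mod (b : R -> Prop) (S : R -> Prop) : Prop :=
  (forall s, S s -> ~ b s) /\
  forall r s, S s -> exists s' r', S s' /\ b (s' * r - r' * s).
Definition right_Ore_mod (b : R -> Prop) (S : R -> Prop) : Prop :=
  (forall s, S s -> ~ b s) /\
  forall r s, S s -> exists s' r', S s' /\ b (r * s' - s * r').

Definition left_Ore (S : R -> Prop) : Prop :=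
  forall r s, S s -> exists s' r', S s' /\ s' * r = r' * s.
Definition right_Ore (S : R -> Prop) : Prop :=
  forall r s, S s -> exists s' r', S s' /\ r * s' = s * r'.
Definition Ore (S : R -> Prop) : Prop := left_Ore S /\ right_Ore S.

Definition perfect_left_localizable (S : R -> Prop) : Prop :=
  left_localizable S /\ forall r, ass S r <-> a S r.
Definition perfect_right_localizable (S : R -> Prop) : Prop :=
  right_localizable S /\ forall r, ass S r <-> a S r.
Definition perfect_localizable (S : R -> Prop) : Prop :=
  localizable S /\ forall r, ass S r <-> a S r.

Definition Lpre_l (S : R -> Prop) : Prop := left_Ore_mod (la S) S.
Definition Lpost_r (S : R -> Prop) : Prop := right_Ore_mod (ra S) S.
Definition Lpre_post_lr (S : R -> Prop) : Prop := Lpre_l S /\ Lpost_r S.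

Definition LOre_l (S : R -> Prop) : Prop := left_localizable S /\ left_Ore S.
Definition LOre_r (S : R -> Prop) : Prop := right_localizable S /\ right_Ore S.

End Loc.
Arguments univ_loc {R} S A sigma.

(* Main.v *)
Require Import Defs.
From HB Require Import structures.
From mathcomp Require Import all_boot all_order all_algebra.
From mathcomp Require Import boolp.
From Stdlib Require Import Setoid Morphisms RelationClasses ClassicalEpsilon.
Set Implicit Arguments. Unset Strict Implicit. Unset Printing Implicit Defensive.
Import GRing.Theory.
Local Open Scope ring_scope.

Record OreData (R : pzRingType) := {
  oZ : R -> Prop; oS : R -> Prop;
  oZ0 : oZ 0;
  oZB : forall x y, oZ x -> oZ y -> oZ (x - y);
  oZMl : forall r x, oZ x -> oZ (r * x);
  oZMr : forall r x, oZ x -> oZ (x * r);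
  oS1 : oS 1;
  oSM : forall a b, oS a -> oS b -> oS (a * b);
  oSZ : forall s, oS s -> ~ oZ s;
  olreg : forall x s, oS s -> oZ (x * s) -> oZ x;
  orreg : forall x s, oS s -> oZ (s * x) -> oZ x;
  oore : forall r s, oS s -> exists s' r', oS s' /\ oZ (s' * r - r' * s) }.

Section OreQ.
Variables (R : pzRingType) (D : OreData R).
Local Notation Z := (oZ D).
Local Notation S := (oS D).

Definition eqv (x y : R) := Z (x - y).
Arguments eqv : simpl never.

Lemma ZD x y : Z x -> Z y -> Z (x + y).
Proof.
move=> hx hy; rewrite -[y]opprK; apply: oZB => //; rewrite -sub0r.
exact: oZB (oZ0 D) hy.
Qed.
Lemma eqv_refl : Reflexive eqv. Proof. by move=> x; rewrite /eqv subrr; exact: oZ0. Qed.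
Lemma eqv_sym : Symmetric eqv.
Proof. by move=> x y h; rewrite /eqv -opprB -sub0r; apply: oZB => //; exact: oZ0. Qed.
Lemma eqv_trans : Transitive eqv.
Proof. move=> x y z h1 h2; rewrite /eqv.
have -> : x - z = (x - y) + (y - z) by rewrite addrA subrK.
exact: (ZD h1 h2). Qed.
#[local] Instance eqv_Eq : Equivalence eqv.
Proof. split; [exact eqv_refl|exact eqv_sym|exact eqv_trans]. Qed.
#[local] Instance add_Proper : Proper (eqv ==> eqv ==> eqv) (@GRing.add R).
Proof. move=> x x' hx y y' hy; rewrite /eqv.
have -> : x + y - (x' + y') = (x - x') + (y - y') by rewrite opprD addrACA.
exact: ZD. Qed.
#[local] Instance mul_Proper : Proper (eqv ==> eqv ==> eqv) (@GRing.mul R).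
Proof. move=> x x' hx y y' hy; rewrite /eqv.
have -> : x * y - x' * y' = (x - x') * y + x' * (y - y').
  by rewrite mulrBl mulrBr addrA subrK.
apply: ZD; [exact: oZMr | exact: oZMl]. Qed.
#[local] Instance opp_Proper : Proper (eqv ==> eqv) (@GRing.opp R).
Proof. move=> x x' hx; rewrite /eqv -opprD -sub0r; apply: oZB => //; exact: oZ0. Qed.

Lemma eqvE x y : x = y -> eqv x y. Proof. by move=> ->; reflexivity. Qed.
Lemma lregE x y s : S s -> eqv (x * s) (y * s) -> eqv x y.
Proof. by move=> Ss h; apply: (olreg Ss); rewrite mulrBl. Qed.
Lemma rregE x y s : S s -> eqv (s * x) (s * y) -> eqv x y.
Proof. by move=> Ss h; apply: (orreg Ss); rewrite mulrBr. Qed.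
Lemma oreE r s : S s -> exists s' r', S s' /\ eqv (s' * r) (r' * s).
Proof. exact: oore. Qed.

Record valid (G : R -> R -> Prop) : Prop := Valid {
 vC : forall x y x' y', G x y -> eqv x x' -> eqv y y' -> G x' y';
 vL : forall c x y, G x y -> G (c * x) (c * y);
 vA : forall x1 y1 x2 y2, G x1 y1 -> G x2 y2 -> G (x1 + x2) (y1 + y2);
 vF : forall x y y', G x y -> G x y' -> eqv y y';
 vD : forall x, exists t y, S t /\ G (t * x) y;
 vK : forall t x y, S t -> G (t * x) (t * y) -> G x y }.
Arguments vC {G} v {x y x' y'} _ _ _.
Arguments vL {G} v c {x y} _.
Arguments vA {G} v {x1 y1 x2 y2} _ _.
Arguments vF {G} v {x y y'} _ _.
Arguments vD {G} v x.
Arguments vK {G} v {t x y} _ _.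

Lemma vFC G x y x' y' : valid G -> G x y -> G x' y' -> eqv x x' -> eqv y y'.
Proof. move=> vG h1 h2 e; apply: (vF vG _ h2); exact: (vC vG h1 e (eqv_refl _)). Qed.

Lemma valid_sub G H : valid G -> valid H -> (forall x y, G x y -> H x y) ->
  forall x y, H x y -> G x y.
Proof.
move=> vG vH sub x y hH.
have [t [w [St hG]]] := vD vG x.
have h1 : H (t * x) (t * y) by exact: vL.
have e := vF vH (sub _ _ hG) h1.
apply: (vK vG St); exact: (vC vG hG (eqv_refl _) e).
Qed.

Definition sR (r : R) : R -> R -> Prop := fun x y => eqv (x * r) y.
Definition oppR (G : R -> R -> Prop) : R -> R -> Prop := fun x y => G x (- y).
Definition addR (G H : R -> R -> Prop) : R -> R -> Prop := fun x y =>
  exists t a b, [/\ S t, G (t * x) a, H (t * x) b & eqv (t * y) (a + b)].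
Definition mulR (G H : R -> R -> Prop) : R -> R -> Prop := fun x y =>
  exists t z, [/\ S t, G (t * x) z & H z (t * y)].
Definition invR (s : R) : R -> R -> Prop := fun x y => eqv x (y * s).

Lemma addI (G H : R -> R -> Prop) x y a b :
  G x a -> H x b -> eqv y (a + b) -> addR G H x y.
Proof. by move=> h1 h2 e; exists 1, a, b; rewrite !mul1r; split=> //; exact: oS1. Qed.
Lemma mulI (G H : R -> R -> Prop) x y z : G x z -> H z y -> mulR G H x y.
Proof. by move=> h1 h2; exists 1, z; rewrite !mul1r; split=> //; exact: oS1. Qed.

Lemma valid_sR r : valid (sR r).
Proof.
rewrite /sR; split.
- by move=> x y x' y' h hx hy; rewrite -hx -hy.
- by move=> c x y h; rewrite -mulrA h; reflexivity.
- by move=> x1 y1 x2 y2 h1 h2; rewrite mulrDl h1 h2; reflexivity.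
- by move=> x y y' h1 h2; rewrite -h1.
- by move=> x; exists 1, (1 * x * r); split; [exact: oS1 | reflexivity].
- by move=> t x y St h; apply: (rregE St); rewrite mulrA.
Qed.

Lemma valid_opp G : valid G -> valid (oppR G).
Proof.
move=> vG; rewrite /oppR; split.
- by move=> x y x' y' h hx hy; apply: (vC vG h hx); rewrite hy; reflexivity.
- by move=> c x y h; rewrite -mulrN; exact: vL.
- by move=> x1 y1 x2 y2 h1 h2; rewrite opprD; exact: vA.
- move=> x y y' h1 h2; have h := vF vG h1 h2.
  by rewrite -[y]opprK -[y']opprK h; reflexivity.
- move=> x; have [t [y [St h]]] := vD vG x.
  by exists t, (- y); rewrite opprK.
- by move=> t x y St h; rewrite -mulrN in h; exact: (vK vG St).
Qed.

Lemma valid_add G H : valid G -> valid H -> valid (addR G H).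
Proof.
move=> vG vH; rewrite /addR; split.
- move=> x y x' y' [t [a [b [St hG hH e]]]] hx hy.
  have ex : eqv (t * x) (t * x') by rewrite hx; reflexivity.
  exists t, a, b; split=> //.
  + exact: (vC vG hG ex (eqv_refl _)).
  + exact: (vC vH hH ex (eqv_refl _)).
  + by rewrite -hy.
- move=> c x y [t [a [b [St hG hH e]]]].
  have [t' [d [St' e']]] := oreE c St.
  have ex : eqv (d * (t * x)) (t' * (c * x)) by rewrite !mulrA e'; reflexivity.
  exists t', (d * a), (d * b); split=> //.
  + exact: (vC vG (vL vG d hG) ex (eqv_refl _)).
  + exact: (vC vH (vL vH d hH) ex (eqv_refl _)).
  + by rewrite mulrA e' -mulrA e mulrDr; reflexivity.
- move=> x1 y1 x2 y2 [t1 [a1 [b1 [St1 hG1 hH1 e1]]]] [t2 [a2 [b2 [St2 hG2 hH2 e2]]]].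
  have [c [d [Sc e]]] := oreE t1 St2.
  have ex1 : eqv (c * (t1 * x1)) (c * t1 * x1) by rewrite mulrA; reflexivity.
  have ex2 : eqv (d * (t2 * x2)) (c * t1 * x2) by rewrite mulrA e; reflexivity.
  exists (c * t1), (c * a1 + d * a2), (c * b1 + d * b2); split.
  + exact: oSM.
  + rewrite mulrDr; apply: vA vG _ _ _ _ (vC vG (vL vG c hG1) ex1 _) (vC vG (vL vG d hG2) ex2 _);
    reflexivity.
  + rewrite mulrDr; apply: vA vH _ _ _ _ (vC vH (vL vH c hH1) ex1 _) (vC vH (vL vH d hH2) ex2 _);
    reflexivity.
  + have -> : c * t1 * (y1 + y2) = c * (t1 * y1) + (c * t1) * y2 by rewrite mulrDr mulrA.
    rewrite e1 e -mulrA e2 !mulrDr addrACA; reflexivity.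
- move=> x y y' [t [a [b [St hG hH e]]]] [t' [a' [b' [St' hG' hH' e']]]].
  have [c [d [Sc ec]]] := oreE t St'.
  have ex : eqv (c * (t * x)) (d * (t' * x)) by rewrite !mulrA ec; reflexivity.
  have ea := vFC vG (vL vG c hG) (vL vG d hG') ex.
  have eb := vFC vH (vL vH c hH) (vL vH d hH') ex.
  apply: (rregE (oSM Sc St)).
  have -> : c * t * y = c * (t * y) by rewrite mulrA.
  rewrite e mulrDr ea eb -mulrDr -e' mulrA ec; reflexivity.
- move=> x; have [t1 [a [St1 hG]]] := vD vG x.
  have [t2 [b [St2 hH]]] := vD vH (t1 * x).
  exists (t2 * t1), (t2 * a + b); split; first exact: oSM.
  apply: (addI (a := t2 * a) (b := b)).
  + by rewrite -mulrA; exact: vL.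
  + by rewrite -mulrA.
  + reflexivity.
- move=> t0 x y St0 [t [a [b [St hG hH e]]]].
  exists (t * t0), a, b; rewrite -!mulrA; split=> //; exact: oSM.
Qed.

Lemma valid_mul G H : valid G -> valid H -> valid (mulR G H).
Proof.
move=> vG vH; rewrite /mulR; split.
- move=> x y x' y' [t [z [St hG hH]]] hx hy.
  exists t, z; split=> //.
  + by apply: (vC vG hG _ (eqv_refl _)); rewrite hx; reflexivity.
  + by apply: (vC vH hH (eqv_refl _)); rewrite hy; reflexivity.
- move=> c x y [t [z [St hG hH]]].
  have [t' [d [St' e']]] := oreE c St.
  exists t', (d * z); split=> //.
  + by apply: (vC vG (vL vG d hG) _ (eqv_refl _)); rewrite !mulrA e'; reflexivity.
  + by apply: (vC vH (vL vH d hH) (eqv_refl _)); rewrite !mulrA e'; reflexivity.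
- move=> x1 y1 x2 y2 [t1 [z1 [St1 hG1 hH1]]] [t2 [z2 [St2 hG2 hH2]]].
  have [c [d [Sc e]]] := oreE t1 St2.
  exists (c * t1), (c * z1 + d * z2); split.
  + exact: oSM.
  + rewrite mulrDr; apply: vA vG _ _ _ _ (vC vG (vL vG c hG1) _ _) (vC vG (vL vG d hG2) _ _);
    rewrite ?mulrA ?e; reflexivity.
  + apply: (vC vH (vA vH (vL vH c hH1) (vL vH d hH2)) (eqv_refl _)).
    have -> : c * t1 * (y1 + y2) = c * (t1 * y1) + (c * t1) * y2 by rewrite mulrDr mulrA.
    rewrite e -mulrA; reflexivity.
- move=> x y y' [t [z [St hG hH]]] [t' [z' [St' hG' hH']]].
  have [c [d [Sc ec]]] := oreE t St'.
  have ex : eqv (c * (t * x)) (d * (t' * x)) by rewrite !mulrA ec; reflexivity.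
  have ez := vFC vG (vL vG c hG) (vL vG d hG') ex.
  have e := vFC vH (vL vH c hH) (vL vH d hH') ez.
  apply: (rregE (oSM Sc St)).
  by rewrite -mulrA e mulrA -ec; reflexivity.
- move=> x; have [t1 [z [St1 hG]]] := vD vG x.
  have [t2 [w [St2 hH]]] := vD vH z.
  exists (t2 * t1), w; split; first exact: oSM.
  apply: (mulI (z := t2 * z)); first by rewrite -mulrA; exact: vL.
  exact: hH.
- move=> t0 x y St0 [t [z [St hG hH]]].
  exists (t * t0), z; rewrite -!mulrA; split=> //; exact: oSM.
Qed.

Lemma valid_inv s : S s -> valid (invR s).
Proof.
move=> Ss; rewrite /invR; split.
- by move=> x y x' y' h hx hy; rewrite -hx -hy.
- by move=> c x y h; rewrite h mulrA; reflexivity.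
- by move=> x1 y1 x2 y2 h1 h2; rewrite h1 h2 mulrDl; reflexivity.
- by move=> x y y' h1 h2; apply: (lregE Ss); rewrite -h1 -h2; reflexivity.
- by move=> x; have [t [r [St e]]] := oreE x Ss; exists t, r.
- by move=> t x y St h; apply: (rregE St); rewrite h mulrA; reflexivity.
Qed.


Definition Q := {G : R -> R -> Prop | valid G}.
Definition rel (q : Q) : R -> R -> Prop := proj1_sig q.
Lemma relP (q : Q) : valid (rel q). Proof. exact: (proj2_sig q). Qed.

Lemma Qext (p q : Q) : (forall x y, rel p x y -> rel q x y) -> p = q.
Proof.
case: p => [G vG]; case: q => [H vH] /= sub.
have eGH : G = H.
  apply: funext => x; apply: funext => y; apply: propext; split.
  - exact: sub.
  - exact: (valid_sub vG vH sub).
subst H; congr (exist _ G _); exact: Prop_irrelevance.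
Qed.

HB.instance Definition _ := gen_eqMixin Q.
HB.instance Definition _ := gen_choiceMixin Q.

Definition sigQ (r : R) : Q := exist _ _ (valid_sR r).
Definition zeroQ : Q := sigQ 0.
Definition oneQ : Q := sigQ 1.
Definition oppQ (q : Q) : Q := exist _ _ (valid_opp (relP q)).
Definition addQ (p q : Q) : Q := exist _ _ (valid_add (relP p) (relP q)).
Definition mulQ (p q : Q) : Q := exist _ _ (valid_mul (relP p) (relP q)).
Definition invQ s (Ss : S s) : Q := exist _ _ (valid_inv Ss).

Lemma addQA : associative addQ.
Proof.
move=> p q r; apply: esym; apply: Qext => x y.
move=> [t [p0 [c [St [t' [a [b [St' hG hH e']]]] hK e]]]].
apply: (vK (valid_add (relP p) (valid_add (relP q) (relP r))) (t := t' * t)).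
  exact: oSM.
apply: (addI (a := a) (b := b + t' * c)).
- by rewrite -mulrA.
- apply: (addI (a := b) (b := t' * c)).
  + by rewrite -mulrA.
  + by rewrite -mulrA; exact: (vL (relP r)).
  + reflexivity.
- by rewrite -mulrA e mulrDr e' addrA; reflexivity.
Qed.

Lemma addQC : commutative addQ.
Proof.
move=> p q; apply: Qext => x y [t [a [b [St hG hH e]]]].
by exists t, b, a; split=> //; rewrite addrC.
Qed.

Lemma add0Q : left_id zeroQ addQ.
Proof.
move=> q; apply: Qext => x y h.
have [t [a [b [St h0 hG e]]]] : addR (sR 0) (rel q) x y := h.
rewrite /sR in h0.
apply: (vK (relP q) St); apply: (vC (relP q) hG (eqv_refl _)).
by rewrite e -h0 mulr0 add0r; reflexivity.
Qed.

Lemma addNQ : left_inverse zeroQ oppQ addQ.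
Proof.
move=> q; apply: Qext => x y h.
have [t [a [b [St h1 h2 e]]]] : addR (oppR (rel q)) (rel q) x y := h.
have hF := vF (relP q) h1 h2.
change (eqv (x * 0) y); rewrite mulr0; apply: eqv_sym; apply: (rregE St).
by rewrite e -hF mulr0 addrN; reflexivity.
Qed.

Lemma mulQA : associative mulQ.
Proof.
move=> p q r; apply: esym; apply: Qext => x y.
move=> [t [z [St [t' [w [St' hG hH]]] hK]]].
exists (t' * t), w; split.
- exact: oSM.
- by rewrite -mulrA.
- apply: (mulI (z := t' * z)); first exact: hH.
  by rewrite -mulrA; exact: (vL (relP r)).
Qed.

Lemma mul1Q : left_id oneQ mulQ.
Proof.
move=> q; apply: Qext => x y h.
have [t [z [St h1 hG]]] : mulR (sR 1) (rel q) x y := h.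
rewrite /sR in h1.
apply: (vK (relP q) St); apply: (vC (relP q) hG _ (eqv_refl _)).
by rewrite -h1 mulr1; reflexivity.
Qed.

Lemma mulQ1 : right_id oneQ mulQ.
Proof.
move=> q; apply: Qext => x y h.
have [t [z [St hG h1]]] : mulR (rel q) (sR 1) x y := h.
rewrite /sR in h1.
apply: (vK (relP q) St); apply: (vC (relP q) hG (eqv_refl _)).
by rewrite -h1 mulr1; reflexivity.
Qed.

Lemma mulQDl : left_distributive mulQ addQ.
Proof.
move=> p q r; apply: esym; apply: Qext => x y.
move=> [u [w1 [w2 [Su [t1 [z1 [St1 hG hK1]]] [t2 [z2 [St2 hH hK2]]] e]]]].
have [c [d [Sc ec]]] := oreE t1 St2.
exists (c * t1 * u), (c * z1 + d * z2); split.
- by apply: oSM => //; exact: oSM.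
- apply: (addI (a := c * z1) (b := d * z2)).
  + by have := vL (relP p) c hG; rewrite !mulrA.
  + by apply: (vC (relP q) (vL (relP q) d hH) _ (eqv_refl _)); rewrite !mulrA ec; reflexivity.
  + reflexivity.
- apply: (vC (relP r) (vA (relP r) (vL (relP r) c hK1) (vL (relP r) d hK2)) (eqv_refl _)).
  have E : eqv (d * (t2 * w2)) (c * (t1 * w2)) by rewrite !mulrA ec; reflexivity.
  by rewrite -(mulrA (c * t1)) e mulrDr -!mulrA E; reflexivity.
Qed.

Lemma mulQDr : right_distributive mulQ addQ.
Proof.
move=> p q r; apply: Qext => x y.
move=> [t [z [St hG [t' [a [b [St' hH hK e]]]]]]].
apply: (vK (valid_add (valid_mul (relP p) (relP q)) (valid_mul (relP p) (relP r)))
  (t := t' * t)); first exact: oSM.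
apply: (addI (a := a) (b := b)).
- apply: (mulI (z := t' * z)); last exact: hH.
  by rewrite -mulrA; exact: (vL (relP p)).
- apply: (mulI (z := t' * z)); last exact: hK.
  by rewrite -mulrA; exact: (vL (relP p)).
- by rewrite -mulrA e; reflexivity.
Qed.

HB.instance Definition _ := GRing.isZmodule.Build Q addQA addQC add0Q addNQ.
HB.instance Definition _ := GRing.Zmodule_isPzRing.Build Q mulQA mul1Q mulQ1 mulQDl mulQDr.


Lemma sigQD a b : sigQ (a + b) = sigQ a + sigQ b.
Proof.
apply: esym; apply: Qext => x y h.
have [t [p [q [St ha hb e]]]] : addR (sR a) (sR b) x y := h.
rewrite /sR in ha hb *; apply: (rregE St).
by rewrite e -ha -hb !mulrDr !mulrA; reflexivity.
Qed.

Lemma sigQM a b : sigQ (a * b) = sigQ a * sigQ b.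
Proof.
apply: esym; apply: Qext => x y h.
have [t [z [St ha hb]]] : mulR (sR a) (sR b) x y := h.
rewrite /sR in ha hb *; apply: (rregE St).
by rewrite -hb -ha !mulrA; reflexivity.
Qed.

Lemma sigQ1 : sigQ 1 = 1. Proof. by []. Qed.

Lemma sigQ_invl s (Ss : S s) : invQ Ss * sigQ s = 1.
Proof.
apply: Qext => x y h.
have [t [z [St h1 h2]]] : mulR (invR s) (sR s) x y := h.
rewrite /sR /invR in h1 h2; change (eqv (x * 1) y); rewrite mulr1.
by apply: (rregE St); rewrite h1 h2; reflexivity.
Qed.

Lemma sigQ_invr s (Ss : S s) : sigQ s * invQ Ss = 1.
Proof.
apply: Qext => x y h.
have [t [z [St h1 h2]]] : mulR (sR s) (invR s) x y := h.
rewrite /sR /invR in h1 h2; change (eqv (x * 1) y); rewrite mulr1.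
by apply: (rregE St); apply: (lregE Ss); rewrite h1 h2; reflexivity.
Qed.

Lemma QE (q : Q) : exists s r (Ss : S s), q = invQ Ss * sigQ r.
Proof.
have [t [r [St h]]] := vD (relP q) 1.
exists t, r, St; apply: esym; apply: Qext => x y h'.
have [t' [z [St' h1 h2]]] : mulR (invR t) (sR r) x y := h'.
rewrite /sR /invR in h1 h2.
apply: (vK (relP q) St').
apply: (vC (relP q) (vL (relP q) z h) _ h2).
by rewrite mulr1 h1; reflexivity.
Qed.

Lemma Q1_neq0 : (1 : Q) <> 0.
Proof.
move=> h.
have : rel (1 : Q) 1 1 by change (eqv (1 * 1) 1); rewrite mulr1; reflexivity.
rewrite h; change (eqv (1 * 0) 1 -> False); rewrite mulr0 => e.
apply: (oSZ (oS1 D)); have := eqv_sym e; by rewrite /eqv subr0.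
Qed.

Lemma sigQ_eq0 r : sigQ r = 0 <-> Z r.
Proof.
split.
- move=> h.
  have : rel (sigQ r) 1 r by change (eqv (1 * r) r); rewrite mul1r; reflexivity.
  rewrite h; change (eqv (1 * 0) r -> Z r); rewrite mulr0 => e.
  by have := eqv_sym e; rewrite /eqv subr0.
- move=> hr; apply: Qext => x y h.
  have E : eqv r 0 by rewrite /eqv subr0.
  change (eqv (x * r) y) in h; change (eqv (x * 0) y).
  by rewrite -E.
Qed.

Section Univ.
Variables (B : pzRingType) (f : R -> B).
Hypotheses (fD : forall a b, f (a + b) = f a + f b)
  (fM : forall a b, f (a * b) = f a * f b) (f1 : f 1 = 1)
  (fS : forall s, S s -> exists y, y * f s = 1 /\ f s * y = 1)
  (fZ : forall z, Z z -> f z = 0).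

Lemma f0 : f 0 = 0.
Proof. by apply: (addrI (f 0)); rewrite -fD !addr0. Qed.
Lemma fN a : f (- a) = - f a.
Proof. by apply: (addrI (f a)); rewrite -fD !subrr f0. Qed.
Lemma f_eqv a b : eqv a b -> f a = f b.
Proof. by move=> h; apply: subr0_eq; rewrite -fN -fD; exact: fZ. Qed.
Lemma fcancel s u v : S s -> f s * u = f s * v -> u = v.
Proof.
move=> Ss h; have [y [hy1 hy2]] := fS Ss.
by rewrite -(mul1r u) -(mul1r v) -hy1 -!mulrA h.
Qed.

Definition gspec (q : Q) (b : B) := forall x y, rel q x y -> f x * b = f y.

Lemma gex q : exists b, gspec q b.
Proof.
have [t [r [St h]]] := vD (relP q) 1.
rewrite mulr1 in h.
have [y [hy1 hy2]] := fS St.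
exists (y * f r) => x' y' hq.
have [c [d [Sc e]]] := oreE x' St.
have e2 := vFC (relP q) (vL (relP q) c hq) (vL (relP q) d h) e.
apply: (fcancel Sc).
rewrite mulrA -fM (f_eqv e) fM -mulrA (mulrA (f t)) hy2 mul1r -fM -(f_eqv e2) fM.
by [].
Qed.

Definition gQ (q : Q) : B := proj1_sig (constructive_indefinite_description _ (gex q)).
Lemma gP q : gspec q (gQ q).
Proof. exact: (proj2_sig (constructive_indefinite_description _ (gex q))). Qed.

Lemma g_uniq q t r b : S t -> rel q t r -> f t * b = f r -> gQ q = b.
Proof. by move=> St h hb; apply: (fcancel St); rewrite (gP h) hb. Qed.

Lemma g_sig r : gQ (sigQ r) = f r.
Proof.
apply: (g_uniq (t := 1) (r := r) (oS1 D)).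
- by change (eqv (1 * r) r); rewrite mul1r; reflexivity.
- by rewrite f1 mul1r.
Qed.

Lemma g1 : gQ 1 = 1.
Proof. by rewrite -sigQ1 g_sig f1. Qed.

Lemma gD p q : gQ (p + q) = gQ p + gQ q.
Proof.
have [t1 [a [St1 ha]]] := vD (relP p) 1.
have [t2 [b [St2 hb]]] := vD (relP q) (t1 * 1).
have hpT := vL (relP p) t2 ha.
apply: (g_uniq (t := t2 * (t1 * 1)) (r := t2 * a + b)).
- by apply: oSM => //; apply: oSM => //; exact: oS1.
- change (addR (rel p) (rel q) (t2 * (t1 * 1)) (t2 * a + b)).
  by apply: (addI (a := t2 * a) (b := b)) => //; reflexivity.
- by rewrite mulrDr (gP hpT) (gP hb) fD.
Qed.

Lemma gM p q : gQ (p * q) = gQ p * gQ q.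
Proof.
have [t1 [z [St1 hz]]] := vD (relP p) 1.
have [t2 [w [St2 hw]]] := vD (relP q) z.
have hpT := vL (relP p) t2 hz.
apply: (g_uniq (t := t2 * (t1 * 1)) (r := w)).
- by apply: oSM => //; apply: oSM => //; exact: oS1.
- change (mulR (rel p) (rel q) (t2 * (t1 * 1)) w).
  exact: (mulI hpT hw).
- by rewrite mulrA (gP hpT) (gP hw).
Qed.

End Univ.

Lemma Q_univ (B : pzRingType) (f : R -> B) :
  (forall a b, f (a + b) = f a + f b) ->
  (forall a b, f (a * b) = f a * f b) -> f 1 = 1 ->
  (forall s, S s -> exists y, y * f s = 1 /\ f s * y = 1) ->
  (forall z, Z z -> f z = 0) ->
  exists g : Q -> B, [/\ forall p q, g (p + q) = g p + g q,
     forall p q, g (p * q) = g p * g q, g 1 = 1 & forall r, g (sigQ r) = f r].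
Proof.
move=> fD fM f1 fS fZ.
exists (gQ fD fM fS fZ); split.
- exact: gD.
- exact: gM.
- exact: g1.
- exact: g_sig.
Qed.

End OreQ.
Section MkR.
Variables (A B : pzRingType) (f : A -> B).
Hypotheses (fB : forall x y, f (x - y) = f x - f y) (f1 : f 1 = 1)
  (fM : forall x y, f (x * y) = f x * f y).
Definition mkf := f.
HB.instance Definition _ := GRing.isZmodMorphism.Build A B mkf fB.
HB.instance Definition _ := GRing.isMonoidMorphism.Build A B mkf (f1, fM).
Definition mkr : {rmorphism A -> B} := mkf.
Lemma mkrE x : mkr x = f x. Proof. by []. Qed.
End MkR.

Lemma addf_sub (A B : zmodType) (f : A -> B) :
  (forall a b, f (a + b) = f a + f b) -> forall a b, f (a - b) = f a - f b.
Proof. by move=> fD a b; have := fD (a - b) b; rewrite subrK => ->; rewrite addrK. Qed.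

Section ZfromI.
Variables (R : pzRingType) (I S : R -> Prop).
Hypotheses (I0 : I 0) (IB : forall x y, I x -> I y -> I (x - y))
  (IMl : forall r x, I x -> I (r * x)) (IMr : forall r x, I x -> I (x * r))
  (S1 : S 1) (SM : forall a b, S a -> S b -> S (a * b)) (SI : forall s, S s -> ~ I s)
  (Ilreg : forall x s, S s -> I (x * s) -> I x)
  (Iore : forall r s, S s -> exists s' r', S s' /\ I (s' * r - r' * s)).

Definition ZI (x : R) := exists t, S t /\ I (t * x).

Lemma ID x y : I x -> I y -> I (x + y).
Proof. move=> hx hy; rewrite -[y]opprK; apply: IB => //; rewrite -sub0r; exact: IB. Qed.

Lemma ZI0 : ZI 0. Proof. by exists 1; rewrite mulr0. Qed.
Lemma ZIB x y : ZI x -> ZI y -> ZI (x - y).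
Proof.
move=> [t1 [St1 h1]] [t2 [St2 h2]].
have [c [d [Sc e]]] := Iore t1 St2.
exists (c * t1); split; first exact: SM.
have -> : c * t1 * (x - y) = c * (t1 * x) - ((c * t1 - d * t2) * y + d * (t2 * y)).
  by rewrite mulrBr mulrBl (mulrA d) subrK mulrA.
apply: IB; first exact: IMl.
by apply: ID; [exact: IMr | exact: IMl].
Qed.
Lemma ZIMl r x : ZI x -> ZI (r * x).
Proof.
move=> [t [St h]]; have [c [d [Sc e]]] := Iore r St.
exists c; split=> //.
have -> : c * (r * x) = (c * r - d * t) * x + d * (t * x).
  by rewrite mulrBl (mulrA d) subrK mulrA.
by apply: ID; [exact: IMr | exact: IMl].
Qed.
Lemma ZIMr r x : ZI x -> ZI (x * r).
Proof. by move=> [t [St h]]; exists t; split=> //; rewrite mulrA; exact: IMr. Qed.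
Lemma ZIS s : S s -> ~ ZI s.
Proof. by move=> Ss [t [St h]]; apply: (SI (SM St Ss)). Qed.
Lemma ZIlreg x s : S s -> ZI (x * s) -> ZI x.
Proof. by move=> Ss [t [St h]]; exists t; split=> //; apply: (Ilreg Ss); rewrite -mulrA. Qed.
Lemma ZIrreg x s : S s -> ZI (s * x) -> ZI x.
Proof. by move=> Ss [t [St h]]; exists (t * s); split; [exact: SM | rewrite -mulrA]. Qed.
Lemma ZIore r s : S s -> exists s' r', S s' /\ ZI (s' * r - r' * s).
Proof.
move=> Ss; have [s' [r' [Ss' h]]] := Iore r Ss.
by exists s', r'; split=> //; exists 1; split=> //; rewrite mul1r.
Qed.

Definition mkD : OreData R :=
  @Build_OreData R ZI S ZI0 ZIB ZIMl ZIMr S1 SM ZIS ZIlreg ZIrreg ZIore.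
End ZfromI.

Section Final.
Variable R : pzRingType.
Implicit Types S : R -> Prop.

Lemma inter_ideal (P : (R -> Prop) -> Prop) :
  is_ideal (fun r => forall b, is_ideal b -> P b -> b r).
Proof.
split; [|split].
- by move=> b [h0 _] _.
- move=> x y hx hy b ib hb; have [_ [iB _]] := ib.
  by apply: iB; [exact: hx | exact: hy].
- move=> r x hx; split=> b ib hb; have [_ [_ iM]] := ib.
  + exact: (iM r x (hx b ib hb)).1.
  + exact: (iM r x (hx b ib hb)).2.
Qed.

Lemma la_ideal S : is_ideal (la S).
Proof. exact: (inter_ideal (fun b => forall s, S s -> lreg_mod b s)). Qed.
Lemma ra_ideal S : is_ideal (ra S).
Proof. exact: (inter_ideal (fun b => forall s, S s -> rreg_mod b s)). Qed.

Lemma la_lreg S s : S s -> lreg_mod (la S) s.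
Proof. by move=> Ss x h b ib hb; exact: (hb s Ss x (h b ib hb)). Qed.
Lemma ra_rreg S s : S s -> rreg_mod (ra S) s.
Proof. by move=> Ss x h b ib hb; exact: (hb s Ss x (h b ib hb)). Qed.
Lemma a_lreg S s : S s -> lreg_mod (a S) s.
Proof. by move=> Ss x h b ib hb; exact: ((hb s Ss).1 x (h b ib hb)). Qed.
Lemma a_rreg S s : S s -> rreg_mod (a S) s.
Proof. by move=> Ss x h b ib hb; exact: ((hb s Ss).2 x (h b ib hb)). Qed.
Lemma la_a S r : la S r -> a S r.
Proof. by move=> h b ib hb; apply: h ib _ => s Ss; exact: (hb s Ss).1. Qed.
Lemma ra_a S r : ra S r -> a S r.
Proof. by move=> h b ib hb; apply: h ib _ => s Ss; exact: (hb s Ss).2. Qed.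

Lemma ker_ideal (A : pzRingType) (f : {rmorphism R -> A}) : is_ideal (fun r => f r = 0).
Proof.
split; [exact: rmorph0 | split].
- by move=> x y hx hy; rewrite rmorphB hx hy subrr.
- by move=> r x hx; rewrite !rmorphM hx mulr0 mul0r.
Qed.

Lemma inv_reg S (A : pzRingType) (f : {rmorphism R -> A}) s :
  inverts S f -> S s ->
  lreg_mod (fun r => f r = 0) s /\ rreg_mod (fun r => f r = 0) s.
Proof.
move=> hf Ss; have [y [h1 h2]] := hf s Ss; split=> x.
- by rewrite rmorphM => h; rewrite -[f x]mulr1 -h2 mulrA h mul0r.
- by rewrite rmorphM => h; rewrite -[f x]mul1r -h1 -mulrA h mulr0.
Qed.

Lemma ass_ideal S : is_ideal (ass S).
Proof.
split; [|split].
- by move=> A sg U; exact: rmorph0.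
- by move=> x y hx hy A sg U; rewrite rmorphB (hx A sg U) (hy A sg U) subrr.
- move=> r x hx; split=> A sg U; rewrite rmorphM (hx A sg U).
  + by rewrite mulr0.
  + by rewrite mul0r.
Qed.

Lemma ass_reg S s : S s -> lreg_mod (ass S) s /\ rreg_mod (ass S) s.
Proof.
move=> Ss; split=> x h A sg U.
- exact: ((inv_reg U.1 Ss).1 x (h A sg U)).
- exact: ((inv_reg U.1 Ss).2 x (h A sg U)).
Qed.

Lemma a_ass S r : a S r -> ass S r.
Proof. by move=> h; apply: h (ass_ideal S) _ => s Ss; exact: ass_reg. Qed.
Lemma la_ass S r : la S r -> ass S r.
Proof. by move=> h; apply: h (ass_ideal S) _ => s Ss; exact: (ass_reg Ss).1. Qed.
Lemma ra_ass S r : ra S r -> ass S r.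
Proof. by move=> h; apply: h (ass_ideal S) _ => s Ss; exact: (ass_reg Ss).2. Qed.

Lemma kill_la S (B : pzRingType) (f : {rmorphism R -> B}) r :
  inverts S f -> la S r -> f r = 0.
Proof. by move=> hf h; apply: h (ker_ideal f) _ => s Ss; exact: (inv_reg hf Ss).1. Qed.
Lemma kill_ra S (B : pzRingType) (f : {rmorphism R -> B}) r :
  inverts S f -> ra S r -> f r = 0.
Proof. by move=> hf h; apply: h (ker_ideal f) _ => s Ss; exact: (inv_reg hf Ss).2. Qed.

Lemma uniq_left S (A B : pzRingType) (sg : {rmorphism R -> A}) (f : R -> B)
  (h1 h2 : {rmorphism A -> B}) :
  (forall a : A, exists s r (y : A),
      S s /\ y * sg s = 1 /\ sg s * y = 1 /\ a = y * sg r) ->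
  (forall r, h1 (sg r) = f r) -> (forall r, h2 (sg r) = f r) -> h1 =1 h2.
Proof.
move=> hE e1 e2 q; have [s [r [y [_ [hy1 [hy2 ->]]]]]] := hE q.
rewrite !rmorphM e1 e2; congr (_ * _).
have k1 : h1 y * f s = 1 by rewrite -e1 -rmorphM hy1 rmorph1.
have k2 : f s * h2 y = 1 by rewrite -e2 -rmorphM hy2 rmorph1.
by rewrite -[h1 y]mulr1 -k2 mulrA k1 mul1r.
Qed.

Lemma uniq_right S (A B : pzRingType) (sg : {rmorphism R -> A}) (f : R -> B)
  (h1 h2 : {rmorphism A -> B}) :
  (forall a : A, exists s r (y : A),
      S s /\ y * sg s = 1 /\ sg s * y = 1 /\ a = sg r * y) ->
  (forall r, h1 (sg r) = f r) -> (forall r, h2 (sg r) = f r) -> h1 =1 h2.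
Proof.
move=> hE e1 e2 q; have [s [r [y [_ [hy1 [hy2 ->]]]]]] := hE q.
rewrite !rmorphM e1 e2; congr (_ * _).
have k1 : h1 y * f s = 1 by rewrite -e1 -rmorphM hy1 rmorph1.
have k2 : f s * h2 y = 1 by rewrite -e2 -rmorphM hy2 rmorph1.
by rewrite -[h1 y]mulr1 -k2 mulrA k1 mul1r.
Qed.

Lemma Lpre_left S : mult_set S -> Lpre_l S -> perfect_left_localizable S.
Proof.
move=> [S1 [S0 SM]] [hSI hore].
have [I0 [IB IM]] := la_ideal S.
pose D := mkD I0 IB (fun r x h => (IM r x h).1) (fun r x h => (IM r x h).2) S1 SM hSI
  (fun x s Ss => la_lreg Ss (x := x)) hore.
pose sg := mkr (addf_sub (sigQD D)) (sigQ1 D) (sigQM D).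
have hE : forall q : Q D, exists s r (y : Q D),
    S s /\ y * sg s = 1 /\ sg s * y = 1 /\ q = y * sg r.
  move=> q; have [s [r [Ss ->]]] := QE q.
  exists s, r, (invQ Ss); split=> //; split; [exact: sigQ_invl | split=> //].
  exact: sigQ_invr.
have U : univ_loc S (Q D) sg.
  split.
  - move=> s Ss; exists (invQ (D := D) Ss); split; [exact: sigQ_invl | exact: sigQ_invr].
  - move=> B f hf.
    have fZ : forall z, oZ D z -> f z = 0.
      move=> z [t [St h]]; have := kill_la hf h; rewrite rmorphM => h0.
      have [y [hy1 _]] := hf t St.
      by rewrite -[f z]mul1r -hy1 -mulrA h0 mulr0.
    have [g [gD gM g1 gs]] := Q_univ (D := D) (f := f) (rmorphD f) (rmorphM f) (rmorph1 f) hf fZ.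
    pose g' := mkr (addf_sub gD) g1 gM.
    exists g'; split; first exact: gs.
    move=> g'' e''; apply: (uniq_left hE e'') => r; exact: gs.
split.
- exists (Q D), sg; split=> //; split; [exact: Q1_neq0 | exact: hE].
- move=> r; split.
  + move=> h; have := h _ _ U; rewrite mkrE => /sigQ_eq0 [t [St ht]].
    exact: (a_rreg St (la_a ht)).
  + exact: a_ass.
Qed.

End Final.

Section Final2.
Variable R : pzRingType.
Implicit Types S : R -> Prop.

Lemma Lpre_right S : mult_set S -> Lpost_r S -> perfect_right_localizable S.
Proof.
move=> [S1 [S0 SM]] [hSI hore].
have [I0 [IB IM]] := ra_ideal S.
pose I : R^c -> Prop := @ra R S.
have I0c : I 0 by exact: I0.
have IBc : forall x y : R^c, I x -> I y -> I (x - y) by exact: IB.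
have IMlc : forall r x : R^c, I x -> I (r * x) by move=> r x h; exact: (IM r x h).2.
have IMrc : forall r x : R^c, I x -> I (x * r) by move=> r x h; exact: (IM r x h).1.
have S1c : S (1 : R^c) by exact: S1.
have SMc : forall a b : R^c, S a -> S b -> S (a * b) by move=> a b ha hb; exact: SM.
have lregc : forall x s : R^c, S s -> I (x * s) -> I x.
  by move=> x s Ss; exact (@ra_rreg R S s Ss x).
have orec : forall r s : R^c, S s -> exists s' r' : R^c, S s' /\ I (s' * r - r' * s).
  by move=> r s Ss; exact (hore r s Ss).
pose D := @mkD (R^c) I S I0c IBc IMlc IMrc S1c SMc hSI lregc orec.
have fB : forall x y : R, (sigQ D (x - y) : (Q D)^c) = sigQ D x - sigQ D y.
  by move=> x y; exact: (addf_sub (sigQD D) x y).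
have fM : forall x y : R, (sigQ D (x * y) : (Q D)^c) = (sigQ D x : (Q D)^c) * sigQ D y.
  by move=> x y; exact: (sigQM D y x).
have f1 : (sigQ D 1 : (Q D)^c) = 1 by exact: (sigQ1 D).
pose sg := @mkr R ((Q D)^c) (sigQ D) fB f1 fM.
have hE : forall q : (Q D)^c, exists s r (y : (Q D)^c),
    S s /\ y * sg s = 1 /\ sg s * y = 1 /\ q = sg r * y.
  move=> q; have [s [r [Ss E]]] := QE q.
  exists s, r, (invQ Ss); split=> //; split; [exact: sigQ_invr | split].
  - exact: sigQ_invl.
  - exact: E.
have U : univ_loc S ((Q D)^c) sg.
  split.
  - move=> s Ss; exists (invQ (D := D) Ss); split; [exact: sigQ_invr | exact: sigQ_invl].
  - move=> B f hf.
    have fZ : forall z, oZ D z -> (f z : B^c) = 0.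
      move=> z [t [St h]]; have := kill_ra hf h; rewrite rmorphM => h0.
      have [y [_ hy2]] := hf t St.
      by rewrite -[f z]mulr1 -hy2 mulrA h0 mul0r.
    have fDc : forall a b : R^c, (f (a + b) : B^c) = (f a : B^c) + f b.
      by move=> a b; exact (rmorphD f a b).
    have fMc : forall a b : R^c, (f (a * b) : B^c) = (f a : B^c) * f b.
      by move=> a b; exact (rmorphM f b a).
    have f1c : (f 1 : B^c) = 1 by exact (rmorph1 f).
    have fSc : forall s, oS D s -> exists y : B^c, y * (f s : B^c) = 1 /\ (f s : B^c) * y = 1.
      by move=> s Ss; have [y [h1 h2]] := hf s Ss; exists y; split.
    have [g [gD gM g1 gs]] := Q_univ (D := D) (B := B^c) (f := f) fDc fMc f1c fSc fZ.
    have gB : forall p q : (Q D)^c, (g (p - q) : B) = (g p : B) - (g q : B).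
      by move=> p q; exact (addf_sub gD p q).
    have gM' : forall p q : (Q D)^c, (g (p * q) : B) = (g p : B) * (g q : B).
      by move=> p q; exact (gM q p).
    have g1' : (g 1 : B) = 1 by exact g1.
    pose g' := @mkr ((Q D)^c) B g gB g1' gM'.
    exists g'; split; first exact: gs.
    move=> g'' e''; apply: (uniq_right hE e'') => r; exact: gs.
split.
- exists ((Q D)^c), sg; split=> //; split; [exact: (@Q1_neq0 _ D) | exact: hE].
- move=> r; split.
  + move=> h; have := h _ _ U; rewrite mkrE => h0.
    have [t [St ht]] : oZ D r by exact ((proj1 (@sigQ_eq0 (R^c) D r)) h0).
    exact: (a_lreg St (ra_a ht)).
  + exact: a_ass.
Qed.

End Final2.

Section Main.
Variable R : pzRingType.
Implicit Types S : R -> Prop.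

Lemma LOre_Lpre S : mult_set S -> LOre_l S -> Lpre_l S.
Proof.
move=> [S1 [S0 SM]] [[A [sg [U [n0 _]]]] LO]; split.
- move=> s Ss hs; have h0 := la_ass hs U.
  have [y [hy1 _]] := U.1 s Ss; apply: n0.
  by rewrite -hy1 h0 mulr0.
- move=> r s Ss; have [s' [r' [Ss' e]]] := LO r s Ss.
  by exists s', r'; split=> //; rewrite e subrr; exact: (la_ideal S).1.
Qed.

Lemma LOre_Lpost S : mult_set S -> LOre_r S -> Lpost_r S.
Proof.
move=> [S1 [S0 SM]] [[A [sg [U [n0 _]]]] RO]; split.
- move=> s Ss hs; have h0 := ra_ass hs U.
  have [y [hy1 _]] := U.1 s Ss; apply: n0.
  by rewrite -hy1 h0 mulr0.
- move=> r s Ss; have [s' [r' [Ss' e]]] := RO r s Ss.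
  by exists s', r'; split=> //; rewrite e subrr; exact: (ra_ideal S).1.
Qed.

Lemma Ore_Lpp S : mult_set S -> Ore S -> Lpre_post_lr S.
Proof.
move=> [S1 [S0 SM]] [lO rO].
pose b := fun r : R => exists s t, S s /\ S t /\ s * r * t = 0.
have bI : is_ideal b.
  split; [| split].
  - by exists 1, 1; rewrite mulr0 mul0r.
  - move=> x y [s1 [t1 [Ss1 [St1 h1]]]] [s2 [t2 [Ss2 [St2 h2]]]].
    have [s' [r' [Ss' Es]]] := lO s1 s2 Ss2.
    have [v [u [Sv Ev]]] := rO t2 t1 St1.
    exists (s' * s1), (t2 * v); split; [exact: SM | split; [exact: SM |]].
    have E1 : s' * s1 * x * (t2 * v) = 0.
      rewrite Ev; have -> : s' * s1 * x * (t1 * u) = s' * (s1 * x * t1) * u by rewrite !mulrA.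
      by rewrite h1 mulr0 mul0r.
    have E2 : s' * s1 * y * (t2 * v) = 0.
      rewrite Es; have -> : r' * s2 * y * (t2 * v) = r' * (s2 * y * t2) * v by rewrite !mulrA.
      by rewrite h2 mulr0 mul0r.
    by rewrite mulrBr mulrBl E1 E2 subrr.
  - move=> r x [s [t [Ss [St h]]]]; split.
    + have [s' [r' [Ss' Es]]] := lO r s Ss.
      exists s', t; split=> //; split=> //.
      have -> : s' * (r * x) * t = (s' * r) * x * t by rewrite !mulrA.
      rewrite Es; have -> : r' * s * x * t = r' * (s * x * t) by rewrite !mulrA.
      by rewrite h mulr0.
    + have [v [u [Sv Ev]]] := rO r t St.
      exists s, v; split=> //; split=> //.
      have -> : s * (x * r) * v = s * x * (r * v) by rewrite !mulrA.
      rewrite Ev; have -> : s * x * (t * u) = s * x * t * u by rewrite !mulrA.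
      by rewrite h mul0r.
have blreg : forall s0, S s0 -> lreg_mod b s0.
  move=> s0 Ss0 x [s [t [Ss [St h]]]]; exists s, (s0 * t); split=> //; split.
  - exact: SM.
  - by rewrite -h !mulrA.
have brreg : forall s0, S s0 -> rreg_mod b s0.
  move=> s0 Ss0 x [s [t [Ss [St h]]]]; exists (s * s0), t; split; [exact: SM | split=> //].
  by rewrite -h !mulrA.
have bS : forall s0, S s0 -> ~ b s0.
  move=> s0 Ss0 [s [t [Ss [St h]]]]; apply: S0; rewrite -h.
  exact: (SM _ _ (SM _ _ Ss Ss0) St).
split; split.
- by move=> s Ss hl; exact: (bS s Ss (hl b bI blreg)).
- move=> r s Ss; have [s' [r' [Ss' e]]] := lO r s Ss.
  by exists s', r'; split=> //; rewrite e subrr; exact: (la_ideal S).1.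
- by move=> s Ss hr; exact: (bS s Ss (hr b bI brreg)).
- move=> r s Ss; have [s' [r' [Ss' e]]] := rO r s Ss.
  by exists s', r'; split=> //; rewrite e subrr; exact: (ra_ideal S).1.
Qed.

End Main.

Theorem proposition1p4 (R : pzRingType) :
  (* 1. *)
  ((forall S : R -> Prop, mult_set S -> LOre_l S -> Lpre_l S) /\
   (forall S : R -> Prop, mult_set S -> Lpre_l S -> perfect_left_localizable S) /\
   (forall S : R -> Prop, mult_set S -> (LOre_l S <-> Lpre_l S /\ left_Ore S)) /\
   (forall S : R -> Prop, mult_set S ->
      (LOre_l S <-> perfect_left_localizable S /\ left_Ore S))) /\
  (* 2. *)
  ((forall S : R -> Prop, mult_set S -> LOre_r S -> Lpost_r S) /\
   (forall S : R -> Prop, mult_set S -> Lpost_r S -> perfect_right_localizable S) /\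
   (forall S : R -> Prop, mult_set S -> (LOre_r S <-> Lpost_r S /\ right_Ore S)) /\
   (forall S : R -> Prop, mult_set S ->
      (LOre_r S <-> perfect_right_localizable S /\ right_Ore S))) /\
  (* 3. *)
  ((forall S : R -> Prop, mult_set S -> Ore S -> Lpre_post_lr S) /\
   (forall S : R -> Prop, mult_set S -> Lpre_post_lr S -> perfect_localizable S)).
Proof.
split; [|split].
- split; [exact: LOre_Lpre | split; [exact: Lpre_left | split]].
  + move=> S mS; split.
    * by move=> h; split; [exact: LOre_Lpre | exact: h.2].
    * by move=> [hL hO]; split; [exact: (Lpre_left mS hL).1 | exact: hO].
  + move=> S mS; split.
    * by move=> h; split; [exact: (Lpre_left mS (LOre_Lpre mS h)) | exact: h.2].
    * by move=> [hP hO]; split; [exact: hP.1 | exact: hO].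
- split; [exact: LOre_Lpost | split; [exact: Lpre_right | split]].
  + move=> S mS; split.
    * by move=> h; split; [exact: LOre_Lpost | exact: h.2].
    * by move=> [hL hO]; split; [exact: (Lpre_right mS hL).1 | exact: hO].
  + move=> S mS; split.
    * by move=> h; split; [exact: (Lpre_right mS (LOre_Lpost mS h)) | exact: h.2].
    * by move=> [hP hO]; split; [exact: hP.1 | exact: hO].
- split; first exact: Ore_Lpp.
  move=> S mS [hl hr].
  have [Ll hP] := Lpre_left mS hl.
  have [Lr _] := Lpre_right mS hr.
  by split; [split | exact: hP].
Qed.
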